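(* Let $\mu$ be a finite positive Borel measure on $\mathbb{T}$ with $\mu^c\ll\mu$, and let $h = d\mu^c/d\mu$. Let $\mathcal{H}$ be a separable complex Hilbert space and $J$ a conjugation on $\mathcal{H}$. Define $\mathbf{J}^\#$ on $\mathscr{L}^2(\mu,\mathcal{H})$ by $$(\mathbf{J}^\#\mathbf{f})(\xi) = h(\xi)^{1/2} J(\mathbf{f}(\overline{\xi}))\quad\text{for } \mu\text{-a.e. } \xi\in\mathbb{T}.$$ Then (a) $\mathbf{J}^\#$ is a conjugation on $\mathscr{L}^2(\mu,\mathcal{H})$, and (b) $\mathbf{J}^\#\mathbf{M}_\xi\mathbf{J}^\# = \mathbf{M}_\xi$.
   Context: A conjugation is an antilinear, isometric map $C$ with $C^2 = I$. $\mu^c(\Omega) := \mu(\{\overline{\xi}:\xi\in\Omega\})$. $\mathscr{L}^2(\mu,\mathcal{H})$ is the space of (classes of) $\mu$-measurable $\mathcal{H}$-valued functions $\mathbf{f}$ on $\mathbb{T}$ with $\int \|\mathbf{f}(\xi)\|_{\mathcal{H}}^2\,d\mu(\xi)<\infty$, and $(\mathbf{M}_\xi\mathbf{f})(\xi) = \xi\mathbf{f}(\xi)$. (Since $\mu^c\ll\mu$ implies $\mu\ll\mu^c$, $\mathbf{f}(\overline{\xi})$ is well defined $\mu$-a.e.) *)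

(* Defs.v *)
From HB Require Import structures.
From mathcomp Require Import all_boot all_order all_algebra.
From mathcomp Require Import all_classical all_reals all_analysis.
From mathcomp Require Export complex.
Set Implicit Arguments. Unset Strict Implicit. Unset Printing Implicit Defensive.
Import Order.TTheory GRing.Theory Num.Theory.
Local Open Scope ring_scope.
Local Open Scope classical_set_scope.

Definition circle {R : realType} : set (R * R)%type :=
  [set p | p.1 ^+ 2 + p.2 ^+ 2 = 1].
Definition cconj {R : realType} (p : (R * R)%type) : (R * R)%type := (p.1, - p.2).
Definition cpt {R : realType} (p : (R * R)%type) : R[i] := (p.1 +i* p.2)%C.

Section Hilbert.
Context {R : realType} {H : lmodType R[i]} (ip : H -> H -> R[i]).

Definition hnorm (x : H) : R := Num.sqrt (complex.Re (ip x x)).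

Definition inner_product_axioms : Prop :=
  [/\ forall (a : R[i]) (x y z : H), ip (a *: x + y) z = a * ip x z + ip y z,
      forall x y : H, ip y x = conjc (ip x y),
      forall x : H, complex.Im (ip x x) = 0 /\ 0 <= complex.Re (ip x x)
    & forall x : H, ip x x = 0 -> x = 0].

Definition hcomplete : Prop :=
  forall u : nat -> H,
    (forall e : R, 0 < e -> exists N, forall m n, (N <= m)%N -> (N <= n)%N ->
        hnorm (u m - u n) < e) ->
    exists l : H, forall e : R, 0 < e -> exists N, forall n, (N <= n)%N ->
        hnorm (u n - l) < e.

Definition hseparable : Prop :=
  exists d : nat -> H, forall (x : H) (e : R), 0 < e -> exists n, hnorm (x - d n) < e.

Definition is_separable_hilbert : Prop :=
  [/\ inner_product_axioms, hcomplete & hseparable].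

Definition is_conjugation (J : H -> H) : Prop :=
  [/\ forall (a : R[i]) (x y : H), J (a *: x + y) = conjc a *: J x + J y,
      forall x : H, hnorm (J x) = hnorm x
    & forall x : H, J (J x) = x].

(* (weak) measurability of an H-valued function; for separable H this is
   equivalent to strong measurability (Pettis) *)
Definition hmeasurable (f : (R * R)%type -> H) : Prop :=
  forall v : H, measurable_fun setT (fun x => complex.Re (ip (f x) v)) /\
                measurable_fun setT (fun x => complex.Im (ip (f x) v)).

Definition L2 (mu : {measure set (R * R)%type -> \bar R}) (f : (R * R)%type -> H)
  : Prop :=
  hmeasurable f /\ (\int[mu]_x ((hnorm (f x)) ^+ 2)%:E < +oo)%E.

Definition L2norm2 (mu : {measure set (R * R)%type -> \bar R}) (f : (R * R)%type -> H)
  : \bar R := \int[mu]_x ((hnorm (f x)) ^+ 2)%:E.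

End Hilbert.

Definition Jsharp {R : realType} {H : lmodType R[i]} (J : H -> H)
  (h : (R * R)%type -> R) (f : (R * R)%type -> H) : (R * R)%type -> H :=
  fun x => (Num.sqrt (h x))%:C%C *: J (f (cconj x)).

Definition Mxi {R : realType} {H : lmodType R[i]} (f : (R * R)%type -> H)
  : (R * R)%type -> H :=
  fun x => cpt x *: f x.

(* Main.v *)
Require Import Defs.
From HB Require Import structures.
From mathcomp Require Import all_boot all_order all_algebra.
From mathcomp Require Import all_classical all_reals all_analysis.
From mathcomp Require Import complex.
From mathcomp Require Import measurable_realfun.
From mathcomp Require Import ring lra.
Import Order.TTheory GRing.Theory Num.Theory.
Local Open Scope ring_scope.
Local Open Scope classical_set_scope.

Lemma idem0 (V : zmodType) (a : V) : a = a + a -> a = 0.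
Proof. by move=> /(congr1 (fun t => t - a)); rewrite addrK subrr. Qed.

Section Hil.
Context {R : realType} {H : lmodType R[i]} (ip : H -> H -> R[i]) (J : H -> H).
Hypothesis IP : inner_product_axioms ip.
Hypothesis CJ : is_conjugation ip J.

Lemma ipDZl a x y z : ip (a *: x + y) z = a * ip x z + ip y z.
Proof. by case: IP. Qed.
Lemma ipC x y : ip y x = conjc (ip x y).
Proof. by case: IP. Qed.
Lemma ip_pos x : complex.Im (ip x x) = 0 /\ 0 <= complex.Re (ip x x).
Proof. by case: IP. Qed.

Lemma ip0l z : ip 0 z = 0.
Proof.
by apply: idem0; have := ipDZl 1 0 0 z; rewrite scaler0 addr0 mul1r.
Qed.
Lemma ipZl a x z : ip (a *: x) z = a * ip x z.
Proof. by rewrite -[a *: x]addr0 ipDZl ip0l addr0. Qed.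
Lemma ipDl x y z : ip (x + y) z = ip x z + ip y z.
Proof. by rewrite -[x]scale1r ipDZl mul1r scale1r. Qed.
Lemma ipNl x z : ip (- x) z = - ip x z.
Proof. by rewrite -scaleN1r ipZl mulN1r. Qed.
Lemma ipZr a x z : ip z (a *: x) = conjc a * ip z x.
Proof. by rewrite ipC ipZl rmorphM /= -ipC. Qed.
Lemma ipDr x y z : ip z (x + y) = ip z x + ip z y.
Proof. by rewrite ipC ipDl rmorphD /= -!ipC. Qed.
Lemma ipNr x z : ip z (- x) = - ip z x.
Proof. by rewrite ipC ipNl rmorphN /= -ipC. Qed.

Lemma JDZ a x y : J (a *: x + y) = conjc a *: J x + J y.
Proof. by case: CJ. Qed.
Lemma JK x : J (J x) = x.
Proof. by case: CJ. Qed.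
Lemma J0 : J 0 = 0.
Proof.
by apply: idem0; have := JDZ 1 0 0; rewrite scaler0 addr0 rmorph1 scale1r.
Qed.
Lemma JZ a x : J (a *: x) = conjc a *: J x.
Proof. by rewrite -[a *: x]addr0 JDZ J0 addr0. Qed.
Lemma JD x y : J (x + y) = J x + J y.
Proof. by rewrite -[x]scale1r JDZ rmorph1 !scale1r. Qed.

Lemma ipself x : ip x x = (complex.Re (ip x x))%:C%C.
Proof. by have [] := ip_pos x; case: (ip x x) => a b /= ->. Qed.

Lemma ipJself x : ip (J x) (J x) = ip x x.
Proof.
case: CJ => _ hn _; have := hn x; rewrite /hnorm => /(congr1 (fun t => t ^+ 2)).
rewrite !sqr_sqrtr; [|by case: (ip_pos x)|by case: (ip_pos (J x))].
by move=> e; rewrite ipself e -ipself.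
Qed.

Lemma ReJJ x y : complex.Re (ip (J x) (J y)) = complex.Re (ip x y).
Proof.
have := ipJself (x + y); rewrite JD !ipDl !ipDr !ipJself.
rewrite (ipC (J x) (J y)) (ipC x y).
move: (ip (J x) (J y)) (ip x y) (ip x x) (ip y y) => [a b] [c d] [e f] [g k].
move=> /(congr1 (@complex.Re _)) /=. lra.
Qed.

Lemma ipJJ x y : ip (J x) (J y) = conjc (ip x y).
Proof.
have h1 := ReJJ x y.
have := ReJJ ('i%C *: x) y; rewrite JZ !ipZl.
have -> : conjc 'i%C = - 'i%C :> R[i] by apply/eqP; rewrite /= eq_complex /= !eqxx /=; rewrite oppr0 eqxx.
move: h1; move: (ip (J x) (J y)) (ip x y) => [a b] [c d] /= h1 h2.
congr (_ +i* _)%C; lra.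
Qed.

Lemma hnorm2 x : hnorm ip x ^+ 2 = complex.Re (ip x x).
Proof. by rewrite /hnorm sqr_sqrtr //; case: (ip_pos x). Qed.

Lemma hnormRZ2 (r : R) x : hnorm ip (r%:C%C *: x) ^+ 2 = r ^+ 2 * hnorm ip x ^+ 2.
Proof.
rewrite !hnorm2 ipZl ipZr conjc_real.
by move: (ip x x) => [a b] /=; ring.
Qed.

Lemma hnormJ2 x : hnorm ip (J x) ^+ 2 = hnorm ip x ^+ 2.
Proof. by rewrite !hnorm2 ipJself. Qed.

Lemma ReipB y d : complex.Re (ip (y - d) (y - d)) =
  complex.Re (ip y y) - 2 * complex.Re (ip y d) + complex.Re (ip d d).
Proof.
rewrite ipDl ipNl !ipDr !ipNr (ipC y d).
move: (ip y y) (ip y d) (ip d d) => [a b] [c e] [f g] /=; ring.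
Qed.

Lemma ReipJ y v : complex.Re (ip (J y) v) = complex.Re (ip y (J v)).
Proof. by rewrite -{1}(JK v) ipJJ; case: (ip y (J v)). Qed.
Lemma ImipJ y v : complex.Im (ip (J y) v) = - complex.Im (ip y (J v)).
Proof. by rewrite -{1}(JK v) ipJJ; case: (ip y (J v)). Qed.

End Hil.

Lemma cconjK {R : realType} (x : (R * R)%type) : cconj (cconj x) = x.
Proof. by case: x => a b; rewrite /cconj /= opprK. Qed.

Lemma image_cconj {R : realType} (A : set (R * R)%type) : cconj @` A = cconj @^-1` A.
Proof.
apply/seteqP; split => [x [y Ay <-]|x Ax]; first by rewrite /preimage /= cconjK.
by exists (cconj x) => //; rewrite cconjK.
Qed.

Lemma mcconj {R : realType} : measurable_fun setT (@cconj R).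
Proof. apply: measurable_fun_pair => //=; exact: measurableT_comp. Qed.

Section Meas.
Local Open Scope ereal_scope.
Context {R : realType} (mu : {measure set (R * R)%type -> \bar R}) (h : (R * R)%type -> R).
Hypothesis mh : measurable_fun setT h.
Hypothesis h0 : forall x, (0 <= h x)%R.
Hypothesis hd : forall A, measurable A -> mu (cconj @` A) = \int[mu]_(x in A) (h x)%:E.

Definition nu := pushforward mu (@cconj R).

Let nu0 : nu set0 = 0.
Proof. by rewrite /nu /pushforward preimage_set0 measure0. Qed.

Let nu_ge0 A : 0 <= nu A.
Proof. by rewrite /nu /pushforward; exact: measure_ge0. Qed.

Let nu_sigma_additive : semi_sigma_additive nu.
Proof.
move=> F mF tF mUF; rewrite /nu /pushforward preimage_bigcup.
apply: measure_semi_sigma_additive.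
- by move=> n; rewrite -[X in measurable X]setTI; exact: mcconj.
- apply/trivIsetP => /= i j _ _ ij; rewrite -preimage_setI.
  by move/trivIsetP : tF => /(_ _ _ _ _ ij) ->//; rewrite preimage_set0.
- by rewrite -preimage_bigcup -[X in measurable X]setTI; exact: mcconj.
Qed.

HB.instance Definition _ := isMeasure.Build _ _ _ nu nu0 nu_ge0 nu_sigma_additive.

Lemma nu_dens A : measurable A -> nu A = \int[mu]_(x in A) (h x)%:E.
Proof. by move=> mA; rewrite -hd // image_cconj. Qed.

Import HBNNSimple.

Lemma dens_change (f : (R * R)%type -> \bar R) (E : set (R * R)%type) : (forall x, 0 <= f x) ->
    measurable E -> measurable_fun E f ->
  \int[mu]_(x in E) (f x * (h x)%:E) = \int[nu]_(x in E) f x.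
Proof.
move=> f0 mE mf; set g := fun x => (h x)%:E.
have mg : measurable_fun E g by apply/measurable_funTS/measurable_EFinP.
have g0 : forall x, 0 <= g x by move=> x; rewrite lee_fin.
pose k := nnsfun_approx mE mf.
have -> : \int[nu]_(x in E) f x =
    lim (\int[nu]_(x in E) (EFin \o k n) x @[n --> \oo]).
  have fE x : E x -> f x = lim ((EFin \o k n) x @[n --> \oo]).
    by move=> Ex; apply/esym/cvg_lim => //; exact: cvg_nnsfun_approx.
  under eq_integral => x /[!inE] /fE -> //.
  apply: monotone_convergence => //.
  - move=> n; apply/measurable_EFinP.
    by apply: (measurable_funS measurableT) => //; exact/measurable_funP.
  - by move=> n x Ex //=; rewrite lee_fin.
  - by move=> x Ex a b ab; rewrite lee_fin; exact/lefP/nd_nnsfun_approx.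
have -> : \int[mu]_(x in E) (f \* g) x =
    lim (\int[mu]_(x in E) ((EFin \o k n) \* g) x @[n --> \oo]).
  have fg x : E x -> f x * g x = lim (((EFin \o k n) \* g) x @[n --> \oo]).
    by move=> Ex; apply/esym/cvg_lim => //; apply: cvgeZr;
      [by []|exact: cvg_nnsfun_approx].
  under eq_integral => x /[!inE] /fg -> //.
  apply: monotone_convergence => [//| | |].
  - move=> n; apply/emeasurable_funM => //; apply/measurable_funTS.
      exact/measurable_EFinP.
  - by move=> n x Ex /=; rewrite mule_ge0 ?lee_fin.
  - by move=> x Ex a b ab/=; rewrite lee_wpmul2r ?lee_fin//; exact/lefP/nd_nnsfun_approx.
suff suf n : \int[mu]_(x in E) ((EFin \o k n) x * g x) =
    \int[nu]_(x in E) (EFin \o k n) x.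
  by under eq_fun do rewrite suf.
transitivity (\int[nu]_(x in E)
   (\sum_(y \in range (k n)) (y * \1_(k n @^-1` [set y]) x)%:E)); last first.
  by apply: eq_integral => t tE; rewrite /= fimfunE -fsumEFin.
have indich m r : measurable_fun E (fun x => (r * \1_(k m @^-1` [set r]) x)%:E).
  by apply: (measurable_comp measurableT) => //; exact: measurable_funM.
rewrite ge0_integral_fsum//; last by move=> m y Ey; exact: nnfun_muleindic_ge0.
transitivity (\int[mu]_(x in E) (\sum_(y \in range (k n))
    (y * \1_(k n @^-1` [set y]) x)%:E * g x)).
  under [RHS]eq_integral => x xE.
    rewrite -ge0_mule_fsuml => [|y]; last exact: nnfun_muleindic_ge0.
    rewrite fsumEFin // -(fimfunE _ x); over.
  by [].
rewrite ge0_integral_fsum//; last 2 first.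
  - by move=> y; apply: emeasurable_funM => //.
  - by move=> m y Ey; rewrite mule_ge0 // nnfun_muleindic_ge0.
apply: eq_fsbigr => r rhn.
under [RHS]eq_integral do rewrite EFinM.
rewrite integralZl_indic_nnsfun => //.
under eq_integral do rewrite EFinM -muleA.
rewrite ge0_integralZl//.
- under eq_integral do rewrite muleC.
  rewrite (eq_integral (g \_ (k n @^-1` [set r]))); last first.
    by move=> x xE; rewrite epatch_indic.
  by rewrite -integral_mkcondr -nu_dens// integral_indic// setIC.
- by apply: emeasurable_funM => //; exact/measurable_EFinP.
- by move=> t Et; rewrite mule_ge0 ?lee_fin.
- by move: rhn; rewrite inE => -[t _ <-]; rewrite lee_fin.
Qed.


Lemma cv (G : (R * R)%type -> \bar R) : (forall x, 0 <= G x) -> measurable_fun setT G ->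
  \int[mu]_x ((h x)%:E * G (cconj x)) = \int[mu]_x G x.
Proof.
move=> G0 mG.
have mGc : measurable_fun setT (G \o cconj) by exact: measurableT_comp mG mcconj.
under eq_integral do rewrite muleC.
rewrite (dens_change (G \o cconj)) //; last by move=> x; exact: G0.
have := ge0_integral_pushforward mcconj mu measurableT mGc (fun y _ => G0 _).
rewrite /nu => ->; rewrite preimage_setT.
by apply: eq_integral => x _ /=; rewrite cconjK.
Qed.

Hypothesis mufin : mu setT < +oo.

Lemma hh : {ae mu, forall x, (h x * h (cconj x) = 1)%R}.
Proof.
have mg : measurable_fun setT (fun x => (h x * h (cconj x))%:E).
  by apply/measurable_EFinP; apply: measurable_funM => //; exact: measurableT_comp mh mcconj.
have i1 : mu.-integrable setT (cst 1).
  apply/integrableP; split => //.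
  rewrite (eq_integral (cst 1)); last by move=> x _; rewrite /= ?normr1 ?abse1.
  by rewrite integral_cst // mul1e.
have := integral_ae_eq measurableT i1 mg.
case.
  move=> E _ mE; rewrite integral_cst // mul1e integral_mkcond.
  pose Gm := ((fun y => (h y)%:E) \_ (cconj @^-1` E)).
  have mE' : measurable (cconj @^-1` E).
    by rewrite -[X in measurable X]setTI; exact: mcconj.
  transitivity (\int[mu]_x ((h x)%:E * Gm (cconj x))); last first.
    apply: eq_integral => x _; rewrite /Gm /patch /=.
    have -> : (cconj x \in cconj @^-1` E) = (x \in E) by apply/idP/idP; rewrite !inE /preimage /= cconjK.
    by case: ifP => _ //; rewrite mule0.
  rewrite cv; last 2 first.
  - by move=> x; rewrite /Gm /patch; case: ifP => _; rewrite ?lee_fin.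
  - by apply/(measurable_restrictT _ _).1 => //; apply/measurable_funTS/measurable_EFinP.
  rewrite /Gm -integral_mkcond -hd // image_cconj.
  by congr (mu _); apply/seteqP; split => x /=; rewrite /preimage cconjK.
move=> N [mN N0 sN]; exists N; split => // x /= hx; apply: sN => /= hN; apply: hx.
by move: (hN I) => [].
Qed.

End Meas.

Section NormMeas.
Context {R : realType} {H : lmodType R[i]} (ip : H -> H -> R[i]).
Hypothesis IP : inner_product_axioms ip.

Lemma norm_meas (dd : nat -> H) (f : (R * R)%type -> H) :
  (forall (x : H) (e : R), 0 < e -> exists n, hnorm ip (x - dd n) < e) ->
  hmeasurable ip f ->
  measurable_fun setT (fun x => ((hnorm ip (f x)) ^+ 2)%:E).
Proof.
move=> hs hf.
pose phi n x := ((2 * complex.Re (ip (f x) (dd n)) - complex.Re (ip (dd n) (dd n)))%:E).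
have mphi n : measurable_fun setT (phi n).
  apply/measurable_EFinP; apply: measurable_funB => //.
  apply: measurable_funM => //; exact: (hf (dd n)).1.
have -> : (fun x => ((hnorm ip (f x)) ^+ 2)%:E) = (fun x => esups (fun n => phi n x) 0).
  apply/funext => x; rewrite /esups /=.
  apply/eqP; rewrite eq_le; apply/andP; split.
    apply/lee_addgt0Pr => e e0.
    have se : 0 < Num.sqrt e by rewrite sqrtr_gt0.
    have [n hn] := hs (f x) (Num.sqrt e) se.
    move: hn; rewrite /hnorm ltr_sqrt // ReipB // => hn.
    apply: (@le_trans _ _ (phi n x + e%:E)%E).
      by rewrite /phi -EFinD lee_fin hnorm2 //; lra.
    by rewrite leeD2r //; apply: ereal_sup_ubound; exists n.
  apply: ge_ereal_sup => _ [n _ <-]; rewrite /phi lee_fin hnorm2 //.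
  have := (ip_pos ip IP (f x - dd n)).2; rewrite ReipB //; lra.
exact: measurable_fun_esups.
Qed.
End NormMeas.

Lemma ae_cconj {R : realType} (mu : {measure set (R * R)%type -> \bar R}) (P : (R * R)%type -> Prop) :
  (forall A, measurable A -> mu A = 0%E -> mu (cconj @` A) = 0%E) ->
  {ae mu, forall x, P x} -> {ae mu, forall x, P (cconj x)}.
Proof.
move=> hac [N [mN N0 sN]]; exists (cconj @` N); split.
- by rewrite image_cconj -[X in measurable X]setTI; exact: mcconj.
- exact: hac.
- move=> x /= nP; exists (cconj x); last by rewrite cconjK.
  exact: sN.
Qed.

Lemma ae_mono {R : realType} (mu : {measure set (R * R)%type -> \bar R}) (P Q : (R * R)%type -> Prop) :
  {ae mu, forall x, P x} -> (forall x, P x -> Q x) -> {ae mu, forall x, Q x}.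
Proof.
move=> [N [mN N0 sN]] PQ; exists N; split => // x /= nQ; apply: sN => hp; apply: nQ.
exact: PQ.
Qed.

Arguments ae_cconj {R mu P}.
Arguments ae_mono {R mu P Q}.

Lemma mulC_real {R : realType} (a b : R) : (a%:C * b%:C = (a * b)%:C)%C.
Proof. by rewrite /=; congr (_ +i* _)%C; ring. Qed.

Theorem proposition5p3 (R : realType)
  (mu : {measure set (R * R)%type -> \bar R})
  (H : lmodType R[i]) (ip : H -> H -> R[i]) (J : H -> H)
  (h : (R * R)%type -> R) :
  (* mu is a finite positive Borel measure on T *)
  (mu setT < +oo)%E ->
  mu (~` circle) = 0%E ->
  (* mu^c << mu *)
  (forall A, measurable A -> mu A = 0%E -> mu (cconj @` A) = 0%E) ->
  (* h = d mu^c / d mu *)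
  measurable_fun setT h -> (forall x, 0 <= h x) ->
  (forall A, measurable A -> mu (cconj @` A) = (\int[mu]_(x in A) (h x)%:E)%E) ->
  (* H separable complex Hilbert space, J a conjugation on H *)
  is_separable_hilbert ip -> is_conjugation ip J ->
  (* (a) J^# is a (well-defined) conjugation on L^2(mu, H) *)
  ((forall f, L2 ip mu f -> L2 ip mu (Jsharp J h f)) /\
   (forall f g, L2 ip mu f -> L2 ip mu g -> {ae mu, forall x, f x = g x} ->
      {ae mu, forall x, Jsharp J h f x = Jsharp J h g x}) /\
   (forall (a : R[i]) f g, L2 ip mu f -> L2 ip mu g ->
      {ae mu, forall x, Jsharp J h (fun y => a *: f y + g y) x
                        = conjc a *: Jsharp J h f x + Jsharp J h g x}) /\
   (forall f, L2 ip mu f -> L2norm2 ip mu (Jsharp J h f) = L2norm2 ip mu f) /\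
   (forall f, L2 ip mu f -> {ae mu, forall x, Jsharp J h (Jsharp J h f) x = f x})) /\
  (* (b) J^# M_xi J^# = M_xi *)
  (forall f, L2 ip mu f ->
     {ae mu, forall x, Jsharp J h (Mxi (Jsharp J h f)) x = Mxi f x}).
Proof.
move=> mufin _ hac mh h0 hd [IP _ [dd hsep]] CJ.
have hh1 := hh mu h mh h0 hd mufin.
have nsq f x : hnorm ip (Jsharp J h f x) ^+ 2 = h x * hnorm ip (f (cconj x)) ^+ 2.
  by rewrite /Jsharp hnormRZ2 // hnormJ2 // sqr_sqrtr.
have normeq f : hmeasurable ip f -> L2norm2 ip mu (Jsharp J h f) = L2norm2 ip mu f.
  move=> hf; rewrite /L2norm2.
  under eq_integral do rewrite nsq EFinM.
  apply: (cv mu h mh h0 hd (fun x => ((hnorm ip (f x)) ^+ 2)%:E)).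
    by move=> x; rewrite lee_fin sqr_ge0.
  exact: (norm_meas ip IP dd f hsep hf).
have msq : measurable_fun setT (fun x => Num.sqrt (h x)).
  exact: measurableT_comp (continuous_measurable_fun (@sqrt_continuous R)) mh.
have hmeasJ f : hmeasurable ip f -> hmeasurable ip (Jsharp J h f).
  move=> hf v; have [m1 m2] := hf (J v).
  have m1c := measurableT_comp m1 mcconj.
  have m2c := measurableT_comp m2 mcconj.
  split.
    rewrite (_ : (fun x => _) = (fun x => Num.sqrt (h x) * complex.Re (ip (f (cconj x)) (J v)))).
      exact: measurable_funM.
    apply/funext => x; rewrite /Jsharp ipZl // -(ReipJ ip J IP CJ).
    by case: (ip (J (f (cconj x))) v) => a b /=; ring.
  rewrite (_ : (fun x => _) = (fun x => - (Num.sqrt (h x) * complex.Im (ip (f (cconj x)) (J v))))).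
    by apply: measurableT_comp => //; exact: measurable_funM.
  apply/funext => x; rewrite /Jsharp ipZl //.
  have := ImipJ ip J IP CJ (f (cconj x)) v.
  by case: (ip (J (f (cconj x))) v) => a b /= ->; ring.
split; last first.
  move=> f _; apply: (ae_mono (ae_cconj hac hh1)) => x hx.
  rewrite /Jsharp /Mxi cconjK !(JZ ip J CJ) (JK ip J CJ) !scalerA; congr (_ *: _).
  rewrite cconjK in hx.
  move: hx; case: x => a b /=; set s1 := Num.sqrt _; set s2 := Num.sqrt _ => hx.
  have e : s1 * s2 = 1 by rewrite -sqrtrM // mulrC hx sqrtr1.
  congr (_ +i* _)%C; [transitivity ((s1 * s2) * a) | transitivity ((s1 * s2) * b)];
    try ring; by rewrite e mul1r.
split.
  move=> f [hf fi]; split; first exact: hmeasJ.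
  by have := normeq f hf; rewrite /L2norm2 => ->.
split.
  move=> f g _ _ /(ae_cconj hac) hfg; apply: (ae_mono hfg) => x hx.
  by rewrite /Jsharp hx.
split.
  move=> a f g _ _; apply: aeW => x.
  by rewrite /Jsharp (JDZ ip J CJ) scalerDr !scalerA mulrC.
split.
  by move=> f [hf _]; exact: normeq.
move=> f _; apply: (ae_mono (ae_cconj hac hh1)) => x hx.
rewrite cconjK in hx.
rewrite /Jsharp cconjK (JZ ip J CJ) (JK ip J CJ) scalerA conjc_real mulC_real.
by rewrite -sqrtrM // mulrC hx sqrtr1 scale1r.
Qed.
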